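(* Let $H$ be a finitely generated group, let $\phi\in\operatorname{Aut}(H)$ and let $K$ be a proper subgroup of $H$. Let $G=H\ast_{(K,\phi)}=\langle H, t;\ tkt^{-1}=\phi(k),\ k\in K\rangle$. If the group $N_H(K)/K$ is not residually finite, then $G$ is not residually finite.
   Context: For a group $H$, $\phi\in\operatorname{Aut}(H)$ and a proper subgroup $K\lneq H$, the automorphism-induced HNN-extension $H\ast_{(K,\phi)}$ is the group given by the relative presentation $\langle H, t;\ tkt^{-1}=\phi(k),\ k\in K\rangle$. $N_H(K)$ denotes the normalizer of $K$ in $H$. *)

(* Defs.v *)
From HB Require Import structures.
From mathcomp Require Import all_boot all_fingroup.

Set Implicit Arguments.
Unset Strict Implicit.
Unset Printing Implicit Defensive.

Local Open Scope group_scope.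

Inductive generated (H : groupType) (s : seq H) : H -> Prop :=
  | gen_base x : x \in s -> generated s x
  | gen_one : generated s 1
  | gen_mul x y : generated s x -> generated s y -> generated s (x * y)
  | gen_inv x : generated s x -> generated s x^-1.

Definition finitely_generated (H : groupType) : Prop :=
  exists s : seq H, forall h : H, generated s h.

Definition is_subgroup (H : groupType) (K : {pred H}) : Prop :=
  [/\ 1 \in K, {in K &, forall x y, x * y \in K} & {in K, forall x, x^-1 \in K}].

Definition proper_subgroup (H : groupType) (K : {pred H}) : Prop :=
  is_subgroup K /\ exists h : H, h \notin K.

Definition group_hom (G L : groupType) (f : G -> L) : Prop :=
  {morph f : x y / x * y}.

Definition group_aut (H : groupType) (phi : H -> H) : Prop :=
  group_hom phi /\ bijective phi.

Definition normalizer (H : groupType) (K : {pred H}) : H -> Prop :=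
  fun h => forall k : H, (k \in K) = (h * k * h^-1 \in K).

(* G (with iota : H -> G and stable letter t) is the HNN extension
   <H, t ; t k t^-1 = phi k, k in K>, characterised by its universal property
   (this determines G, iota, t up to unique isomorphism). *)
Definition is_HNN_extension (H : groupType) (K : {pred H}) (phi : H -> H)
    (G : groupType) (iota : H -> G) (t : G) : Prop :=
  [/\ group_hom iota,
      (forall k, k \in K -> t * iota k * t^-1 = iota (phi k)) &
      (forall (L : groupType) (f : H -> L) (s : L),
         group_hom f ->
         (forall k, k \in K -> s * f k * s^-1 = f (phi k)) ->
         exists F : G -> L,
           [/\ group_hom F, (forall h, F (iota h) = f h), F t = s &
               forall F' : G -> L, group_hom F' ->
                 (forall h, F' (iota h) = f h) -> F' t = s ->
                 forall g, F' g = F g])].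

Definition residually_finite (G : groupType) : Prop :=
  forall g : G, g != 1 ->
    exists (F : finGroupType) (f : G -> F), group_hom f /\ f g != 1.

(* Residual finiteness of the quotient group N/K, for K normal in N,
   stated through the correspondence between homomorphisms N/K -> F and
   homomorphisms N -> F that are trivial on K: every non-trivial element
   nK of N/K (i.e. n in N \ K) is not killed by some homomorphism of N/K
   to a finite group. *)
Definition quotient_residually_finite (H : groupType) (N : H -> Prop)
    (K : {pred H}) : Prop :=
  forall n : H, N n -> n \notin K ->
    exists (F : finGroupType) (f : H -> F),
      [/\ (forall x y, N x -> N y -> f (x * y) = f x * f y),
          (forall k, k \in K -> f k = 1) &
          f n != 1].

(* Main.v *)
From HB Require Import structures.
Require Import Defs.
From mathcomp Require Import all_boot all_fingroup.
From mathcomp Require Import boolp.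

Set Implicit Arguments.
Unset Strict Implicit.
Unset Printing Implicit Defensive.
Local Open Scope group_scope.

Record bij (X : Type) := Bij { fw : X -> X; bw : X -> X;
  fwK : cancel fw bw; bwK : cancel bw fw }.

Lemma bij_eq (X : Type) (a b : bij X) : fw a =1 fw b -> a = b.
Proof.
case: a b => f g fK gK [f' g' fK' gK'] /= e.
have ef := funext e; subst f'.
have eg : g = g'.
  by apply: funext => x; rewrite -{1}(gK' x) fK.
subst g'; congr Bij; apply: Prop_irrelevance.
Qed.

HB.instance Definition _ (X : Type) := gen_eqMixin (bij X).
HB.instance Definition _ (X : Type) := gen_choiceMixin (bij X).

Section BijGroup.
Variable X : Type.
Implicit Types a b c : bij X.

Lemma bmul_fK a b : cancel (fw a \o fw b) (bw b \o bw a).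
Proof. by move=> x /=; rewrite fwK fwK. Qed.
Lemma bmul_bK a b : cancel (bw b \o bw a) (fw a \o fw b).
Proof. by move=> x /=; rewrite bwK bwK. Qed.
Definition bmul a b := Bij (bmul_fK a b) (bmul_bK a b).
Definition bone : bij X := @Bij X id id (fun _ => erefl) (fun _ => erefl).
Definition binv a := Bij (bwK a) (fwK a).

Lemma bmulA : associative bmul. Proof. by move=> a b c; apply: bij_eq. Qed.
Lemma bmul1 : left_id bone bmul. Proof. by move=> a; apply: bij_eq. Qed.
Lemma bmulr1 : right_id bone bmul. Proof. by move=> a; apply: bij_eq. Qed.
Lemma bmulV : left_inverse bone binv bmul.
Proof. by move=> a; apply: bij_eq => x /=; rewrite fwK. Qed.
Lemma bmulVr : right_inverse bone binv bmul.
Proof. by move=> a; apply: bij_eq => x /=; rewrite bwK. Qed.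
End BijGroup.

HB.instance Definition _ (X : Type) :=
  isGroup.Build (bij X) (@bmulA X) (@bmul1 X) (@bmulr1 X) (@bmulV X) (@bmulVr X).

Lemma fw_mul (X : Type) (a b : bij X) x : fw (a * b) x = fw a (fw b x).
Proof. by []. Qed.
Lemma fw_inv (X : Type) (a : bij X) x : fw (a^-1) x = bw a x.
Proof. by []. Qed.

Section Hom.
Variables (A B : groupType) (f : A -> B).
Hypothesis fM : group_hom f.
Lemma hom1 : f 1 = 1.
Proof. by apply: (@mulgI _ (f 1)); rewrite -fM !mulg1. Qed.
Lemma homV x : f x^-1 = (f x)^-1.
Proof. by apply: (@mulgI _ (f x)); rewrite -fM !mulgV hom1. Qed.
End Hom.

Lemma hom_comp (A B C : groupType) (f : A -> B) (g : B -> C) :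
  group_hom f -> group_hom g -> group_hom (g \o f).
Proof. by move=> hf hg x y /=; rewrite hf hg. Qed.

Section Main.
Variables (H : groupType) (K : {pred H}) (phi psi : H -> H).
Hypothesis phiM : group_hom phi.
Hypotheses (phiK : cancel phi psi) (psiK : cancel psi phi).
Hypothesis Ksub : is_subgroup K.

Lemma K1 : 1 \in K. Proof. by case: Ksub. Qed.
Lemma KM x y : x \in K -> y \in K -> x * y \in K.
Proof. by case: Ksub => _ h _; apply: h. Qed.
Lemma KV x : x \in K -> x^-1 \in K.
Proof. by case: Ksub => _ _ h; apply: h. Qed.
Lemma KMl k y : k \in K -> (k * y \in K) = (y \in K).
Proof.
move=> kK; apply/idP/idP => [h|]; last exact: KM.
by rewrite -(mulKg k y); apply: KM => //; apply: KV.
Qed.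

Definition X := (H * 'I_3)%type.
Definition actf (h : H) (p : X) : X := (h * p.1, p.2).
Lemma actK h : cancel (actf h) (actf h^-1).
Proof. by case=> y a; rewrite /actf /= mulKg. Qed.
Lemma actVK h : cancel (actf h^-1) (actf h).
Proof. by case=> y a; rewrite /actf /= mulKVg. Qed.
Definition act h : bij X := Bij (actK h) (actVK h).

Definition sf (p : X) : X := (phi p.1, if p.1 \in K then ordS p.2 else p.2).
Definition sb (p : X) : X := (psi p.1, if psi p.1 \in K then ord_pred p.2 else p.2).
Lemma sfK : cancel sf sb.
Proof. by case=> y a; rewrite /sf /sb /= phiK; case: (y \in K); rewrite ?ordSK. Qed.
Lemma sbK : cancel sb sf.
Proof. by case=> y a; rewrite /sf /sb /= psiK; case: (psi y \in K); rewrite ?ord_predK. Qed.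
Definition sB : bij X := Bij sfK sbK.

Lemma act_hom : group_hom act.
Proof. by move=> x y; apply: bij_eq => -[p a]; rewrite /= /actf /= mulgA. Qed.

Lemma act_rel k : k \in K -> sB * act k * sB^-1 = act (phi k).
Proof.
move=> kK; apply: bij_eq => -[y a].
rewrite !fw_mul fw_inv /= /sf /sb /actf /= phiM psiK KMl //.
by case: (psi y \in K); rewrite ?ord_predK.
Qed.

Lemma phi1 : phi 1 = 1. Proof. exact: hom1. Qed.

Lemma noncomm n : n \notin K ->
  act n * (sB^-1 * act (phi n) * sB) != (sB^-1 * act (phi n) * sB) * act n.
Proof.
move=> nK; apply/eqP => /(congr1 (fun b => fw b (1, ord0))).
rewrite !fw_mul !fw_inv /= /sf /sb /actf /= K1 mulg1 phi1 mulg1 phiK (negbTE nK) /=.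
rewrite -phiM phiK.
by case: (n * n \in K) => -[].
Qed.
End Main.

Lemma tcomm (H G : groupType) (K : {pred H}) (phi : H -> H) (iota : H -> G) (t : G) n k :
  group_hom phi -> group_hom iota ->
  (forall k, k \in K -> t * iota k * t^-1 = iota (phi k)) ->
  normalizer K n -> k \in K ->
  let w := t^-1 * iota (phi n) * t in
  w * (iota n)^-1 * iota k = iota k * (w * (iota n)^-1).
Proof.
move=> phiM iM rel Nn kK w.
set k' := n^-1 * k * n.
have k'K : k' \in K by rewrite (Nn k') /k' mulgA mulgK mulKVg.
have e1 : n * k' = k * n by rewrite /k' mulgA mulKVg.
have tk : t * iota k' = iota (phi k') * t by rewrite -(rel _ k'K) mulgVK.
have pk : iota (phi k) = t * iota k * t^-1 by rewrite rel.
have wk : w * iota k' = iota k * w.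
  rewrite /w -mulgA tk mulgA -(mulgA _ (iota (phi n))) -iM -phiM e1 phiM iM pk.
  by rewrite !mulgA mulVg mul1g.
have e2 : (iota n)^-1 * iota k = iota k' * (iota n)^-1.
  by rewrite /k' !iM mulgK homV.
by rewrite -[LHS]mulgA e2 [LHS]mulgA wk -mulgA.
Qed.

Lemma N1 (H : groupType) (K : {pred H}) : normalizer K 1.
Proof. by move=> k; rewrite mul1g invg1 mulg1. Qed.

Lemma NM (H : groupType) (K : {pred H}) x y :
  normalizer K x -> normalizer K y -> normalizer K (x * y).
Proof.
move=> Nx Ny k; rewrite (Ny k) (Nx (y * k * y^-1)); congr (_ \in K).
by rewrite invMg !mulgA.
Qed.

Theorem corollary1p1 (H : groupType) (K : {pred H}) (phi : H -> H)
    (G : groupType) (iota : H -> G) (t : G) :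
  finitely_generated H ->
  group_aut phi ->
  proper_subgroup K ->
  is_HNN_extension K phi iota t ->
  ~ quotient_residually_finite (normalizer K) K ->
  ~ residually_finite G.
Proof.
move=> _ [phiM [psi phiK psiK]] [Ksub _] [iM rel univ] nQ RF.
apply: nQ => n Nn nK.
have [Phi [PhiM Phii Phit _]] :=
  univ _ (@act H) (sB K phiK psiK) (@act_hom H) (act_rel phiM phiK psiK Ksub).
set w := t^-1 * iota (phi n) * t.
have ne : iota n * w != w * iota n.
  apply/eqP => /(congr1 Phi); rewrite /w !PhiM homV // !Phii Phit => e.
  by move: (noncomm phiM phiK psiK Ksub nK); rewrite e eqxx.
have g1 : iota n * w * (w * iota n)^-1 != 1.
  apply: contra ne => /eqP h; apply/eqP.
  by rewrite -(mulgVK (w * iota n) (iota n * w)) h mul1g.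
have [F [f [fM fg]]] := RF _ g1.
set a := f \o iota.
have aM : group_hom a := hom_comp iM fM.
set u := f w * (a n)^-1.
have ucomm : forall k, k \in K -> commute (a k) u.
  move=> k kK; rewrite /commute /u /a /= -(homV fM) -!fM.
  by move: (tcomm phiM iM rel Nn kK) => /= ->.
have nu : ~ commute (a n) u.
  rewrite /commute /u => e; move: fg; rewrite (fM (iota n * w)) (homV fM) (fM (iota n)) (fM w).
  rewrite mulgVK mulgA in e.
  have -> : f (iota n) * f w = f w * f (iota n).
    by apply: (@mulIg _ (a n)^-1); rewrite [RHS]mulgK.
  by rewrite mulgV eqxx.
pose S : {set F} := [set y | `[< exists x, normalizer K x /\ a x = y >]].
have SP y : reflect (exists x, normalizer K x /\ a x = y) (y \in S).
  by rewrite inE; apply: asboolP.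
have gS : group_set S.
  apply/group_setP; split.
    by apply/SP; exists 1; split; [exact: N1 | exact: hom1].
  move=> y1 y2 /SP [x1 [N1x <-]] /SP [x2 [N2x <-]].
  by apply/SP; exists (x1 * x2); split; [exact: NM | exact: aM].
pose Sg := Group gS.
pose Q := gcore 'C[u] Sg.
have NQ x : normalizer K x -> a x \in 'N(Q).
  move=> Nx; apply: (subsetP (gcore_norm _ _)); apply/SP; exists x; split=> //.
have KQ k : k \in K -> a k \in Q.
  move=> kK; apply/bigcapP => y /SP [x [Nx <-]].
  rewrite mem_conjg conjgE invgK -homV // -!aM.
  apply/cent1P; apply: ucomm.
  by rewrite mulgA -(Nx k).
exists (coset_of Q), (fun x => coset Q (a x)); split.
- move=> x y Nx Ny; rewrite aM morphM //; exact: NQ.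
- by move=> k kK; apply: coset_id; apply: KQ.
- apply/eqP => /(coset_idr (NQ _ Nn)) /(subsetP (gcore_sub _ _)) /cent1P.
  exact: nu.
Qed.
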